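(* For every equidistributed infinite permutation $\alpha$ and every $n\ge1$, $p_{\alpha}(n)\geq n$.
   Context: An infinite permutation is an equivalence class of sequences $(a[n])_{n\ge0}$ of pairwise distinct reals, where two sequences are equivalent if $a[i]<a[j]\iff b[i]<b[j]$ for all $i,j$; write $\alpha=(\alpha[n])_{n\ge0}$ with the induced order. A factor of length $n$ is $\alpha[i..i+n-1]$ regarded as a finite permutation (relative order of its elements), independent of position; $p_\alpha(n)$ is the number of distinct factors of length $n$. A sequence $(a[n])$ in $[0,1]$ is equidistributed if $\lim_{n\to\infty}\frac{\#\{0\le i<n:a[i]<t\}}{n}=t$ for each $t\in[0,1]$; a permutation is equidistributed if it has an equidistributed representative in $[0,1]$. *)

(* Defs.v *)
From HB Require Import structures.
From mathcomp Require Import all_boot all_order all_algebra.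
From mathcomp Require Import all_classical all_reals all_analysis.
Set Implicit Arguments. Unset Strict Implicit. Unset Printing Implicit Defensive.
Import Order.TTheory GRing.Theory Num.Theory numFieldNormedType.Exports.
Local Open Scope ring_scope.
Local Open Scope classical_set_scope.

(* Two representatives define the same infinite permutation. *)
Definition order_equiv (R : realType) (a b : nat -> R) : Prop :=
  forall i j : nat, (a i < a j) <-> (b i < b j).

Definition equidistributed (R : realType) (a : nat -> R) : Prop :=
  (forall n, 0 <= a n <= 1) /\
  forall t : R, 0 <= t <= 1 ->
    (fun N : nat => (#|[set i : 'I_N | a i < t]%SET|%:R / N%:R : R)) @ \oo --> t.

(* The factor of length n at position i, as a finite permutation, i.e. the
   relative order of a[i..i+n-1] (independent of position). *)
Definition factor (R : realType) (a : nat -> R) (n i : nat)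
  : {ffun 'I_n * 'I_n -> bool} :=
  [ffun p : 'I_n * 'I_n => a (i + p.1)%N < a (i + p.2)%N].

Definition complexity (R : realType) (a : nat -> R) (n : nat) : nat :=
  #|[set f : {ffun 'I_n * 'I_n -> bool} | `[< exists i : nat, factor a n i = f >]]%SET|.

(* Main.v *)
Require Import Defs.
From mathcomp Require Import all_boot all_order all_algebra.
From mathcomp Require Import all_classical all_reals all_analysis.
From mathcomp Require Import zify ring lra.
Require Import Defs.
Set Implicit Arguments. Unset Strict Implicit. Unset Printing Implicit Defensive.
Import Order.TTheory GRing.Theory Num.Theory numFieldNormedType.Exports.

Definition Sf (R : realType) (a : nat -> R) (k : nat) :=
  [set f : {ffun 'I_k * 'I_k -> bool} | `[< exists i : nat, factor a k i = f >]]%SET.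

Lemma complSf (R : realType) (a : nat -> R) k : complexity a k = #|Sf a k|.
Proof. by []. Qed.

Lemma mem_Sf (R : realType) (a : nat -> R) k i : factor a k i \in Sf a k.
Proof. by rewrite inE; apply/asboolP; exists i. Qed.

Lemma SfP (R : realType) (a : nat -> R) k f : f \in Sf a k -> exists i, factor a k i = f.
Proof. by rewrite inE => /asboolP. Qed.

Definition restrL k (f : {ffun 'I_k.+1 * 'I_k.+1 -> bool}) : {ffun 'I_k * 'I_k -> bool} :=
  [ffun p : 'I_k * 'I_k => f (widen_ord (leqnSn k) p.1, widen_ord (leqnSn k) p.2)].
Definition restrR k (f : {ffun 'I_k.+1 * 'I_k.+1 -> bool}) : {ffun 'I_k * 'I_k -> bool} :=
  [ffun p : 'I_k * 'I_k => f (lift ord0 p.1, lift ord0 p.2)].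

Lemma restrL_factor (R : realType) (a : nat -> R) k i :
  restrL (factor a k.+1 i) = factor a k i.
Proof. by apply/ffunP => p; rewrite !ffunE. Qed.

Lemma restrR_factor (R : realType) (a : nat -> R) k i :
  restrR (factor a k.+1 i) = factor a k i.+1.
Proof. by apply/ffunP => p; rewrite !ffunE /= /bump /= !add1n !addSnnS. Qed.

Lemma Sf_restr (R : realType) (a : nat -> R) k : Sf a k = (@restrL k) @: Sf a k.+1.
Proof.
apply/setP => f; apply/idP/idP.
- by move=> /SfP [i <-]; rewrite -restrL_factor; apply: imset_f (mem_Sf _ _ _).
- by move=> /imsetP [g /SfP [i <-] ->]; rewrite restrL_factor; apply: mem_Sf.
Qed.

Lemma compl_mono (R : realType) (a : nat -> R) k : (complexity a k <= complexity a k.+1)%N.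
Proof. by rewrite !complSf Sf_restr; apply: leq_imset_card. Qed.

Lemma compl1 (R : realType) (a : nat -> R) : (0 < complexity a 1)%N.
Proof. by rewrite complSf card_gt0; apply/set0Pn; exists (factor a 1 0); apply: mem_Sf. Qed.

Lemma find_m (R : realType) (a : nat -> R) n : (1 <= n)%N -> (complexity a n < n)%N ->
  exists k, [/\ (1 <= k)%N, complexity a k = complexity a k.+1 & (complexity a k.+1 <= k)%N].
Proof.
elim: n => [//|n IH] _ h.
have c1 := compl1 a.
case: n IH h => [|n] IH h; first lia.
have m := compl_mono a n.+1.
case: (ltnP (complexity a n.+1) n.+1) => h2; first exact: IH.
exists n.+1; split => //; lia.
Qed.

Lemma determ (R : realType) (a : nat -> R) k : complexity a k = complexity a k.+1 ->
  forall s t, factor a k.+1 s = factor a k.+1 t -> factor a k.+1 s.+1 = factor a k.+1 t.+1.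
Proof.
move=> e.
have inj : {in Sf a k.+1 &, injective (@restrL k)}.
  by apply/imset_injP; rewrite -Sf_restr -!complSf e.
move=> s t est; apply: inj; try apply: mem_Sf.
by rewrite !restrL_factor -!restrR_factor est.
Qed.

Lemma pigeon (R : realType) (a : nat -> R) k : (complexity a k.+1 <= k)%N ->
  exists s t, (s < t <= k)%N /\ factor a k.+1 s = factor a k.+1 t.
Proof.
move=> hc.
pose g := fun i : 'I_k.+1 => factor a k.+1 i.
have hsub : g @: [set: 'I_k.+1]%SET \subset Sf a k.+1.
  by apply/fintype.subsetP => f /imsetP [i _ ->]; apply: mem_Sf.
have nin : ~ {in [set: 'I_k.+1] &, injective g}.
  move=> H; move/imset_injP: H => /eqP e.
  have := subset_leq_card hsub; rewrite e cardsT card_ord -complSf; lia.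
have [x [y [gxy nxy]]] : exists x y, g x = g y /\ x <> y.
  apply: contrapT => H; apply: nin => x y _ _ gxy; apply: contrapT => nxy.
  by apply: H; exists x, y.
have hx := ltn_ord x; have hy := ltn_ord y.
case: (ltngtP x y) => hxy.
- exists x, y; split => //; apply/andP; split => //; lia.
- exists y, x; split => //; apply/andP; split => //; lia.
- by exfalso; apply: nxy; apply: val_inj.
Qed.
Local Open Scope ring_scope.

Lemma mono_up (R : realType) (u : nat -> R) : (forall j, u j <= u j.+1) ->
  forall j0 j, (j0 <= j)%N -> u j0 <= u j.
Proof.
move=> h j0 j /subnK <-; elim: (j - j0)%N => [|d IH] //=.
by rewrite addSn; exact: le_trans IH (h _).
Qed.

Lemma mono_down (R : realType) (u : nat -> R) : (forall j, u j.+1 <= u j) ->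
  forall j0 j, (j0 <= j)%N -> u j <= u j0.
Proof.
move=> h j0 j /subnK <-; elim: (j - j0)%N => [|d IH] //=.
by rewrite addSn; exact: le_trans (h _) IH.
Qed.

Lemma res_const (R : realType) (a : nat -> R) s P (t : R) : (0 < P)%N ->
  (forall i, (s <= i)%N -> (a (i+P)%N < a (i+P+P)%N) = (a i < a (i+P)%N)) ->
  forall i, (s <= i)%N -> exists J, forall j, (J <= j)%N ->
    (a (i + j*P)%N < t) = (a (i + j.+1*P)%N < t).
Proof.
move=> P0 hc i si.
have ci : forall j, (a (i + j*P)%N < a (i + j.+1*P)%N) = (a i < a (i+P)%N).
  elim => [|j IH]; first by rewrite mul0n addn0 mul1n.
  rewrite -IH.
  have -> : (i + j.+2 * P = i + j.+1*P + P)%N by rewrite !mulSn; lia.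
  have -> : (i + j.+1 * P = i + j*P + P)%N by rewrite !mulSn; lia.
  apply: hc; lia.
pose u j := a (i + j*P)%N.
have uS : forall j, a (i + j.+1*P)%N = u j.+1 by [].

case hci : (a i < a (i+P)%N).
- have inc : forall j, u j <= u j.+1 by move=> j; apply: ltW; rewrite /u ci.
  have mono := mono_up inc.
  case: (pselect (exists j0, ~~ (u j0 < t))) => [[j0 hj0]|hall].
  + exists j0 => j hj; rewrite uS.
    have f1 : forall j', (j0 <= j')%N -> ~~ (u j' < t).
      move=> j' hj'; rewrite -leNgt; apply: le_trans (mono _ _ hj'); by rewrite leNgt.
    by rewrite -/(u j) (negbTE (f1 _ hj)) (negbTE (f1 j.+1 _)) //; lia.
  + have allt : forall j, u j < t.
      by move=> j; case: (boolP (u j < t)) => // h; exfalso; apply: hall; exists j.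
    by exists 0%N => j _; rewrite uS -/(u j) !allt.
- have dec : forall j, u j.+1 <= u j.
    by move=> j; rewrite leNgt /u ci hci.
  have mono := mono_down dec.
  case: (pselect (exists j0, u j0 < t)) => [[j0 hj0]|hall].
  + exists j0 => j hj; rewrite uS.
    have f1 : forall j', (j0 <= j')%N -> u j' < t.
      by move=> j' hj'; apply: le_lt_trans (mono _ _ hj') hj0.
    by rewrite -/(u j) (f1 _ hj) (f1 j.+1 _) //; lia.
  + have allt : forall j, ~~ (u j < t).
      by move=> j; apply/negP => h; apply: hall; exists j.
    by exists 0%N => j _; rewrite uS -/(u j) (negbTE (allt _)) (negbTE (allt _)).
Qed.

Lemma uniformK (R : realType) (a : nat -> R) s P (t : R) : (0 < P)%N ->
  (forall i, (s <= i)%N -> (a (i+P)%N < a (i+P+P)%N) = (a i < a (i+P)%N)) ->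
  exists K, forall N, (K <= N)%N -> (a N < t) = (a (N+P)%N < t).
Proof.
move=> P0 hc.
have hr : forall r, (r <= P)%N -> exists J, forall r' j, (r' < r)%N -> (J <= j)%N ->
    (a (s + r' + j*P)%N < t) = (a (s + r' + j.+1*P)%N < t).
  elim => [_|r IH hr]; first by exists 0%N.
  have [J1 H1] := IH (ltnW hr).
  have [J2 H2] := res_const t P0 hc (leq_addr r s).
  exists (maxn J1 J2) => r' j; rewrite ltnS leq_eqVlt => /orP [/eqP -> | hr'] hj.
  - apply: H2; lia.
  - apply: H1; lia.
have [J HJ] := hr P (leqnn P).
exists (s + J*P)%N => N hN.
have e := divn_eq (N - s) P. have lm := ltn_pmod (N - s) P0.
move: e lm; move: ((N - s) %/ P)%N ((N-s) %% P)%N => q r e lm.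
have hq : (J <= q)%N.
  rewrite leqNgt; apply/negP => hq.
  have : (q.+1 * P <= J * P)%N by rewrite leq_mul2r hq orbT.
  rewrite mulSn; lia.
have -> : N = (s + r + q*P)%N by lia.
have -> : (s + r + q*P + P = s + r + q.+1*P)%N by rewrite mulSn; lia.
by apply: HJ.
Qed.

Lemma card_cnt N (p : nat -> bool) :
  #|[set i : 'I_N | p i]%SET| = (\sum_(0 <= i < N) p i)%N.
Proof.
rewrite -sum1_card big_mkcond /= big_mkord; apply: eq_bigr => i _.
by rewrite inE; case: (p i).
Qed.

Lemma window (p : nat -> bool) K P : (0 < P)%N -> (forall N, (K <= N)%N -> p N = p (N+P)%N) ->
  exists w, forall N M, (K <= N)%N ->
    (\sum_(0 <= i < N + M*P) p i = \sum_(0 <= i < N) p i + M*w)%N.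
Proof.
move=> P0 hp.
pose W N := (\sum_(N <= i < N+P) p i)%N.
have WS : forall N, (K <= N)%N -> W N.+1 = W N.
  move=> N hN; rewrite /W addSn big_nat_recr /=; last by lia.
  rewrite (@big_ltn _ _ _ N); last by lia.
  by rewrite -hp // addnC.
have WK : forall N, (K <= N)%N -> W N = W K.
  move=> N /subnK <-; elim: (N - K)%N => // d IH; rewrite addSn WS ?IH //; lia.
exists (W K) => N M hN; elim: M => [|M IH]; first by rewrite !mul0n !addn0.
rewrite mulSn (addnC P) addnA (@big_cat_nat _ _ _ (N + M*P)) /=; [|lia|lia].
rewrite IH.
have := WK (N + M*P)%N; rewrite /W => ->; last by lia.
by rewrite mulSn; lia.
Qed.

Lemma compl_equiv (R : realType) (a b : nat -> R) n :
  (forall i, factor b n i = factor a n i) -> complexity b n = complexity a n.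
Proof.
move=> fe; rewrite !complSf; apply: eq_card => f; rewrite !inE.
by apply/asboolP/asboolP => -[i <-]; exists i; rewrite fe.
Qed.

Local Open Scope classical_set_scope.
Lemma final (R : realType) (a : nat -> R) s P : (0 < P)%N ->
  (forall i, (s <= i)%N -> (a (i+P)%N < a (i+P+P)%N) = (a i < a (i+P)%N)) ->
  (forall t : R, 0 <= t <= 1 ->
    (fun N : nat => (#|[set i : 'I_N | a i < t]%SET|%:R / N%:R : R)) @ \oo --> t) ->
  False.
Proof.
move=> P0 hc hcv.
have p1 : 1 <= P%:R :> R by rewrite ler1n.
pose t : R := (2 * P%:R)^-1.
have et : t * (2 * P%:R) = 1 by rewrite mulVf // gt_eqF //; lra.
have t0 : 0 < t by rewrite invr_gt0; lra.
have t01 : 0 <= t <= 1.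
  apply/andP; split; first lra.
  rewrite invr_le1 ?unitfE ?gt_eqF //; lra.
have [K HK] := uniformK t P0 hc.
have [w Hw] := window (p := fun i => a i < t) P0 HK.
pose eps : R := (4 * (P%:R + 2))^-1.
have ee : eps * (4 * (P%:R + 2)) = 1 by rewrite mulVf // gt_eqF //; lra.
have e0 : 0 < eps by rewrite invr_gt0; lra.
have := hcv t t01; move/cvgrPdist_lt => /(_ eps e0) [N0 _ HN0].
pose N := maxn (maxn N0 K) 1.
have h1 := HN0 N ltac:(rewrite /=; lia).
have h2 := HN0 (N * P.+1)%N ltac:(rewrite /=; nia).
rewrite /= in h1 h2. move: h1 h2. rewrite !(card_cnt _ (fun i => a i < t)) => h1 h2.
rewrite mulnS Hw in h2; last by lia.
move: h1 h2; set c := (\sum_(0 <= i < N) _)%N => h1 h2.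
have N0r : (N%:R : R) != 0 by rewrite pnatr_eq0; lia.
set f1 := c%:R / N%:R in h1.
have ef : (c + N * w)%:R / (N + N * P)%:R = (f1 + w%:R) / (1 + P%:R) :> R.
  rewrite /f1 !natrD !natrM; field.
  rewrite N0r /= -natrM -natrD pnatr_eq0 /N andbC /=; apply/andP; split; [lia|rewrite gt_eqF //; lra].
rewrite ef in h2.
move: h2; set g := (f1 + w%:R) / (1 + P%:R) => h2.
have eg : g * (1 + P%:R) = f1 + w%:R by rewrite /g mulfVK //; lra.
rewrite ltr_distlC in h1. rewrite ltr_distlC in h2.
case/andP: h1 => h1a h1b; case/andP: h2 => h2a h2b.
have h3 : (t - eps) * (1 + P%:R) < g * (1 + P%:R) by rewrite ltr_pM2r //; lra.
have h4 : g * (1 + P%:R) < (t + eps) * (1 + P%:R) by rewrite ltr_pM2r //; lra.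
have hwl : 0 < w%:R :> R by lra.
have hwu : w%:R < 1%:R :> R by lra.
rewrite ltr0n in hwl; rewrite ltr_nat in hwu; lia.
Qed.

Lemma period (R : realType) (a : nat -> R) k s t : complexity a k = complexity a k.+1 ->
  factor a k.+1 s = factor a k.+1 t -> forall x, factor a k.+1 (s+x) = factor a k.+1 (t+x).
Proof.
move=> e est; elim => [|x IH]; first by rewrite !addn0.
by rewrite !addnS; apply: determ.
Qed.

Theorem proposition3 (R : realType) (b : nat -> R) (hb : injective b)
  (heq : exists a : nat -> R, injective a /\ order_equiv a b /\ equidistributed a)
  (n : nat) (hn : (1 <= n)%N) :
  (n <= complexity b n)%N.
Proof.
case: heq => a [ia [oab [a01 hcv]]].
have fe : forall i, factor b n i = factor a n i.
  move=> i; apply/ffunP => p; rewrite !ffunE.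
  by apply/idP/idP => h; apply/oab.
have cab := compl_equiv fe.
rewrite cab leqNgt; apply/negP => hlt.
have [k [k1 ekk hk]] := find_m hn hlt.
have [s [t [/andP [st tk] est]]] := pigeon hk.
have P0 : (0 < t - s)%N by lia.
apply: (final (s := s) P0 _ hcv).
move=> i si.
have := period ekk est (i - s).
have -> : (s + (i - s) = i)%N by lia.
move=> E.
have := congr1 (fun f : {ffun 'I_k.+1 * 'I_k.+1 -> bool} => f (ord0, inord (t - s))) E.
rewrite !ffunE /= inordK; last by lia.
have -> : (t + (i - s) = i + (t - s))%N by lia.
by rewrite !addn0 => ->.
Qed.
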